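(* Let $i\in[n]$ be such that $m_i=1$, and let $N\subseteq M_i$. Then $M_i\setminus N$ is an abelian ideal if and only if there exists $w\in W^i$ such that $N=\overline N(w)$.
   Context: $\Phi$ is a finite irreducible crystallographic root system with basis $\Pi=\{\alpha_1,\dots,\alpha_n\}$, positive roots $\Phi^+$, highest root $\theta=\sum_i m_i\alpha_i$, Weyl group $W$ with length $\ell$. The root poset is $\Phi^+$ with $\beta\ge\gamma$ iff $\beta-\gamma$ is a nonnegative integer combination of simple roots; an abelian ideal is a subset of $\Phi^+$ closed upward in the root poset with $(I+I)\cap\Phi=\emptyset$. $M_i=\{\beta\in\Phi^+\mid\beta\ge\alpha_i\}$; $D_r(w)=\{\alpha\in\Pi\mid\ell(ws_\alpha)<\ell(w)\}$; $W^i=\{w\in W\mid D_r(w)\subseteq\{\alpha_i\}\}$; $\overline N(w)=\{\beta\in\Phi^+\mid w(\beta)\in-\Phi^+\}$. *)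

(* Defs.v *)
From HB Require Import structures.
From mathcomp Require Import all_boot all_order all_algebra.
Set Implicit Arguments. Unset Strict Implicit. Unset Printing Implicit Defensive.
Import Order.TTheory GRing.Theory Num.Theory.
Local Open Scope ring_scope.

Section RootSystems.
Variables (R : realFieldType) (n : nat).
Local Notation V := 'rV[R]_n.

Definition dot (u v : V) : R := (u *m v^T) 0 0.

Definition refl (a v : V) : V := v - ((2 * dot v a) / dot a a) *: a.

Definition is_int (x : R) : Prop := exists z : int, x = z%:~R.

Definition root_system (Phi : seq V) : Prop :=
  [/\ (0 : V) \notin Phi,
      (<<Phi>>%VS = fullv),
      (forall a b, a \in Phi -> b \in Phi -> refl a b \in Phi),
      (forall a b, a \in Phi -> b \in Phi -> is_int ((2 * dot b a) / dot a a))
    & (forall a (c : R), a \in Phi -> c *: a \in Phi -> c = 1 \/ c = -1)].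

Definition irreducible_rs (Phi : seq V) : Prop :=
  forall S : V -> Prop,
    (forall a b, a \in Phi -> b \in Phi -> S a -> ~ S b -> dot a b = 0) ->
    (forall a, a \in Phi -> S a) \/ (forall a, a \in Phi -> ~ S a).

Definition nncomb (alpha : 'I_n -> V) (v : V) : Prop :=
  exists c : 'I_n -> nat, v = \sum_(j < n) (c j)%:R *: alpha j.

Definition is_base (Phi : seq V) (alpha : 'I_n -> V) : Prop :=
  [/\ (forall j, alpha j \in Phi),
      row_free (\matrix_(j < n) alpha j)
    & (forall b, b \in Phi -> nncomb alpha b \/ nncomb alpha (- b))].

Definition posroot (Phi : seq V) (alpha : 'I_n -> V) (b : V) : Prop :=
  b \in Phi /\ nncomb alpha b.

Definition rle (alpha : 'I_n -> V) (g b : V) : Prop := nncomb alpha (b - g).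

Definition Mset (Phi : seq V) (alpha : 'I_n -> V) (i : 'I_n) (b : V) : Prop :=
  posroot Phi alpha b /\ rle alpha (alpha i) b.

Definition abelian_ideal (Phi : seq V) (alpha : 'I_n -> V) (I : V -> Prop) : Prop :=
  [/\ (forall b, I b -> posroot Phi alpha b),
      (forall b g, I b -> posroot Phi alpha g -> rle alpha b g -> I g)
    & (forall b g, I b -> I g -> (b + g) \notin Phi)].

(* Weyl group elements, as words in the simple reflections:
   the word [:: j1; ...; jk] stands for w = s_{j1} ... s_{jk}. *)
Definition wact (alpha : 'I_n -> V) (w : seq 'I_n) (v : V) : V :=
  foldr (fun j x => refl (alpha j) x) v w.

Definition wequiv (alpha : 'I_n -> V) (w w' : seq 'I_n) : Prop :=
  forall v, wact alpha w v = wact alpha w' v.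

Definition is_length (alpha : 'I_n -> V) (w : seq 'I_n) (k : nat) : Prop :=
  (exists w', size w' = k /\ wequiv alpha w w') /\
  (forall w', wequiv alpha w w' -> (k <= size w')%N).

Definition right_descent (alpha : 'I_n -> V) (w : seq 'I_n) (j : 'I_n) : Prop :=
  exists k1 k2, [/\ is_length alpha (rcons w j) k1, is_length alpha w k2 & (k1 < k2)%N].

Definition in_Wi (alpha : 'I_n -> V) (i : 'I_n) (w : seq 'I_n) : Prop :=
  forall j, right_descent alpha w j -> j = i.

Definition Nbar (Phi : seq V) (alpha : 'I_n -> V) (w : seq 'I_n) (b : V) : Prop :=
  posroot Phi alpha b /\
  exists g, posroot Phi alpha g /\ wact alpha w b = - g.

End RootSystems.

(* Main.v *)
Require Import Defs.
From HB Require Import structures.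
From mathcomp Require Import all_boot all_order all_algebra.
From mathcomp Require Import ring lra zify.
From Stdlib Require Import ClassicalEpsilon.
Set Implicit Arguments. Unset Strict Implicit. Unset Printing Implicit Defensive.
Import Order.TTheory GRing.Theory Num.Theory.
Local Open Scope ring_scope.
Section Dot.
Variables (R : realFieldType) (n : nat).
Local Notation V := 'rV[R]_n.

Lemma dotE (u v : V) : dot u v = \sum_k u 0 k * v 0 k.
Proof. by rewrite /dot !mxE; apply: eq_bigr => k _; rewrite mxE. Qed.

Lemma dotC (u v : V) : dot u v = dot v u.
Proof. by rewrite !dotE; apply: eq_bigr => k _; rewrite mulrC. Qed.

Lemma dotDl (u u' v : V) : dot (u + u') v = dot u v + dot u' v.
Proof. by rewrite !dotE -big_split; apply: eq_bigr => k _; rewrite mxE mulrDl. Qed.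

Lemma dotZl (c : R) (u v : V) : dot (c *: u) v = c * dot u v.
Proof. by rewrite !dotE mulr_sumr; apply: eq_bigr => k _; rewrite mxE mulrA. Qed.

Lemma dotNl (u v : V) : dot (- u) v = - dot u v.
Proof. by rewrite -scaleN1r dotZl mulN1r. Qed.

Lemma dotBl (u u' v : V) : dot (u - u') v = dot u v - dot u' v.
Proof. by rewrite dotDl dotNl. Qed.

Lemma dotDr (u v v' : V) : dot u (v + v') = dot u v + dot u v'.
Proof. by rewrite dotC dotDl !(dotC u). Qed.
Lemma dotZr (c : R) (u v : V) : dot u (c *: v) = c * dot u v.
Proof. by rewrite dotC dotZl dotC. Qed.
Lemma dotNr (u v : V) : dot u (- v) = - dot u v.
Proof. by rewrite dotC dotNl dotC. Qed.
Lemma dotBr (u v v' : V) : dot u (v - v') = dot u v - dot u v'.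
Proof. by rewrite dotDr dotNr. Qed.

Lemma dot_ge0 (u : V) : 0 <= dot u u.
Proof. by rewrite dotE; apply: sumr_ge0 => k _; rewrite -expr2 sqr_ge0. Qed.

Lemma dot_eq0 (u : V) : dot u u = 0 -> u = 0.
Proof.
rewrite dotE => /eqP; rewrite psumr_eq0; last by move=> k _; rewrite -expr2 sqr_ge0.
move=> /allP H; apply/rowP => k; rewrite mxE.
by have := H k (mem_index_enum k); rewrite /= mulf_eq0 orbb => /eqP.
Qed.

Lemma dot_neq0 (u : V) : u != 0 -> dot u u != 0.
Proof. by apply: contra => /eqP/dot_eq0 ->. Qed.

Lemma reflD a (u v : V) : refl a (u + v) = refl a u + refl a v.
Proof. rewrite /refl dotDl mulrDr mulrDl scalerDl; set x := _ *: a; set y := _ *: a. by rewrite opprD !addrA (addrAC u v). Qed.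

Lemma reflZ a c (u : V) : refl a (c *: u) = c *: refl a u.
Proof. by rewrite /refl dotZl scalerBr scalerA !mulrA (mulrC 2). Qed.

Lemma reflN a (u : V) : refl a (- u) = - refl a u.
Proof. by rewrite -scaleN1r reflZ scaleN1r. Qed.

Lemma refl_self (a : V) : a != 0 -> refl a a = - a.
Proof.
move=> /dot_neq0 H; rewrite /refl -mulrA divff // mulr1 scalerDl scale1r.
by rewrite opprD addrA subrr add0r.
Qed.

Lemma refl_dot (a u v : V) : a != 0 -> dot (refl a u) (refl a v) = dot u v.
Proof.
move=> /dot_neq0 H; rewrite /refl dotBl !dotBr !dotZl !dotZr (dotC a v).
field; exact: H.
Qed.

Lemma refl_dot_a (a u : V) : a != 0 -> dot (refl a u) a = - dot u a.
Proof.
move=> /dot_neq0 H; rewrite /refl dotBl dotZl; field; exact: H.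
Qed.

Lemma reflK (a : V) : a != 0 -> involutive (refl a).
Proof.
move=> Ha u; rewrite {1}/refl refl_dot_a // /refl.
rewrite mulrN mulNr scaleNr opprK.
by rewrite -addrA addNr addr0.
Qed.

End Dot.

Definition pb (P : Prop) : bool := if excluded_middle_informative P then true else false.
Lemma pbP (P : Prop) : reflect P (pb P).
Proof. by rewrite /pb; case: excluded_middle_informative => H; constructor. Qed.

Section Roots.
Variables (R : realFieldType) (n : nat) (Phi : seq 'rV[R]_n) (alpha : 'I_n -> 'rV[R]_n).
Hypothesis hrs : root_system Phi.
Hypothesis hb : is_base Phi alpha.
Local Notation V := 'rV[R]_n.

Definition isnat (x : R) := exists c : nat, x = c%:R.

Lemma isnat0 : isnat 0. Proof. by exists 0%N. Qed.
Lemma isnatD x y : isnat x -> isnat y -> isnat (x + y).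
Proof. by move=> [a ->] [b ->]; exists (a + b)%N; rewrite natrD. Qed.
Lemma isnatM x y : isnat x -> isnat y -> isnat (x * y).
Proof. by move=> [a ->] [b ->]; exists (a * b)%N; rewrite natrM. Qed.
Lemma isnat_ge0 x : isnat x -> 0 <= x.
Proof. by move=> [a ->]; rewrite ler0n. Qed.
Lemma isnatN x : isnat x -> isnat (- x) -> x = 0.
Proof. move=> /isnat_ge0 h1 /isnat_ge0 h2; lra. Qed.
Lemma isnat_sum (I : finType) (F : I -> R) : (forall k, isnat (F k)) -> isnat (\sum_k F k).
Proof.
move=> H; elim/big_ind: _ => //; [exact: isnat0|exact: isnatD].
Qed.
Lemma isnat_le1 x : isnat x -> x <= 1 -> x = 0 \/ x = 1.
Proof.
move=> [a ->] h; have : (a <= 1)%N by rewrite -(ler_nat R).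
by case: a {h} => [|[|a]] //= _; [left|right].
Qed.
Lemma isnat_sum1 x y : isnat x -> isnat y -> x + y = 1 -> (x = 1 /\ y = 0) \/ (x = 0 /\ y = 1).
Proof.
move=> [a ->] [b ->] /eqP; rewrite -natrD => h.
have : (a + b == 1)%N by rewrite -(eqr_nat R).
by case: a {h} => [|[|a]]; case: b => [|[|b]] //= _; [right|left].
Qed.
Lemma isnat_m1 : ~ isnat (-1).
Proof. move=> /isnat_ge0; lra. Qed.

Definition Amx : 'M[R]_n := \matrix_(j < n) alpha j.
Lemma Amx_unit : Amx \in unitmx.
Proof. by case: hb => _ h _; rewrite -row_free_unit. Qed.
Definition crd (v : V) : R ^ n := [ffun k => (v *m invmx Amx) 0 k].

Lemma comb_mx (c : 'I_n -> R) : \sum_j c j *: alpha j = (\row_j c j) *m Amx.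
Proof. by rewrite mulmx_sum_row; apply: eq_bigr => j _; rewrite rowK mxE. Qed.

Lemma crd_comb (c : 'I_n -> R) k : crd (\sum_j c j *: alpha j) k = c k.
Proof. by rewrite ffunE comb_mx mulmxK ?Amx_unit // mxE. Qed.

Lemma crd_expand (v : V) : v = \sum_j crd v j *: alpha j.
Proof.
rewrite comb_mx -[LHS](mulmxKV Amx_unit); congr (_ *m _).
by apply/rowP => k; rewrite [RHS]mxE ffunE.
Qed.

Lemma crd_inj (u v : V) : (forall k, crd u k = crd v k) -> u = v.
Proof. by move=> H; rewrite (crd_expand u) (crd_expand v); apply: eq_bigr => j _; rewrite H. Qed.

Lemma crdD (u v : V) k : crd (u + v) k = crd u k + crd v k.
Proof. by rewrite !ffunE mulmxDl mxE. Qed.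
Lemma crdZ c (u : V) k : crd (c *: u) k = c * crd u k.
Proof. by rewrite !ffunE -scalemxAl mxE. Qed.
Lemma crdN (u : V) k : crd (- u) k = - crd u k.
Proof. by rewrite !ffunE mulNmx mxE. Qed.
Lemma crdB (u v : V) k : crd (u - v) k = crd u k - crd v k.
Proof. by rewrite crdD crdN. Qed.
Lemma crd0 k : crd 0 k = 0.
Proof. by rewrite ffunE mul0mx mxE. Qed.
Lemma crd_sum (I : finType) (F : I -> V) k : crd (\sum_i F i) k = \sum_i crd (F i) k.
Proof. by elim/big_rec2: _ => [|i x y _ <-]; rewrite ?crd0 ?crdD. Qed.

Lemma crd_alpha j k : crd (alpha j) k = (j == k)%:R.
Proof.
have -> : alpha j = \sum_i (j == i)%:R *: alpha i.
  by rewrite (bigD1 j) //= eqxx scale1r big1 ?addr0 // => i /negbTE; rewrite eq_sym => ->; rewrite scale0r.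
by rewrite crd_comb.
Qed.

Definition pos (v : V) := forall k, isnat (crd v k).

Lemma nncombP v : nncomb alpha v <-> pos v.
Proof.
split.
  by move=> [c ->] k; rewrite crd_comb; exists (c k).
move=> H.
have H' : forall k, exists c : nat, crd v k == c%:R by move=> k; case: (H k) => c ->; exists c.
exists (fun k => xchoose (H' k)); rewrite {1}(crd_expand v); apply: eq_bigr => j _.
by have /eqP <- := xchooseP (H' j).
Qed.

Lemma pos_alpha j : pos (alpha j).
Proof. by move=> k; rewrite crd_alpha; exists (j == k : nat). Qed.
Lemma posD u v : pos u -> pos v -> pos (u + v).
Proof. by move=> hu hv k; rewrite crdD; apply: isnatD. Qed.
Lemma pos0 : pos 0.
Proof. by move=> k; rewrite crd0; exact: isnat0. Qed.
Lemma pos_both v : pos v -> pos (- v) -> v = 0.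
Proof. by move=> h1 h2; apply: crd_inj => k; rewrite crd0; apply: isnatN => //; rewrite -crdN. Qed.

Lemma zero_notin : (0 : V) \notin Phi. Proof. by case: hrs. Qed.
Lemma root_neq0 v : v \in Phi -> v != 0.
Proof. by move=> h; apply: contraNneq zero_notin => <-. Qed.
Lemma alpha_in j : alpha j \in Phi. Proof. by case: hb. Qed.
Lemma alpha_neq0 j : alpha j != 0. Proof. exact: root_neq0 (alpha_in j). Qed.
Lemma refl_in a b : a \in Phi -> b \in Phi -> refl a b \in Phi.
Proof. by case: hrs => _ _ h _ _; apply: h. Qed.
Lemma oppr_in a : a \in Phi -> - a \in Phi.
Proof. by move=> h; rewrite -refl_self ?root_neq0 // refl_in. Qed.
Lemma root_int a b : a \in Phi -> b \in Phi -> is_int ((2 * dot b a) / dot a a).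
Proof. by case: hrs => _ _ _ h _; apply: h. Qed.
Lemma root_mult a c : a \in Phi -> c *: a \in Phi -> c = 1 \/ c = -1.
Proof. by case: hrs => _ _ _ _ h; apply: h. Qed.
Lemma root_posneg v : v \in Phi -> pos v \/ pos (- v).
Proof. by case: hb => _ _ h /h [] /nncombP; [left|right]. Qed.
Lemma root_not_both v : v \in Phi -> pos v -> pos (- v) -> False.
Proof. by move=> h h1 h2; move: (root_neq0 h); rewrite (pos_both h1 h2) eqxx. Qed.

Lemma refl_pos j x : x \in Phi -> pos x -> x != alpha j ->
  pos (refl (alpha j) x) /\ refl (alpha j) x != alpha j.
Proof.
move=> xin xp xne.
have [k [kj ck]] : exists k, k != j /\ crd x k != 0.
  apply: NNPP => H.
  have ex : x = crd x j *: alpha j.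
    apply: crd_inj => k; rewrite crdZ crd_alpha.
    case: (eqVneq j k) => [->|jk]; first by rewrite mulr1.
    rewrite mulr0; apply/eqP; apply: negbNE; apply/negP => hk.
    by apply: H; exists k; rewrite eq_sym jk.
  have := root_mult (alpha_in j) (etrans (congr1 (fun y => y \in Phi) (esym ex)) xin).
  case=> hc; first by move: xne; rewrite ex hc scale1r eqxx.
  by apply: isnat_m1; rewrite -hc; apply: xp.
have ek : crd (refl (alpha j) x) k = crd x k.
  by rewrite /refl crdB crdZ crd_alpha (eq_sym j k) (negbTE kj) mulr0 subr0.
have rin : refl (alpha j) x \in Phi by rewrite refl_in ?alpha_in.
split.
  case: (root_posneg rin) => // hn; exfalso.
  move: ck; rewrite (isnatN (xp k)) ?eqxx //.
  by rewrite -ek -crdN; apply: hn.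
apply/eqP => he; move: ck; rewrite -ek he crd_alpha (eq_sym j k) (negbTE kj) eqxx //.
Qed.

Local Notation wa := (wact alpha).
Lemma wact_cons a w v : wa (a :: w) v = refl (alpha a) (wa w v). Proof. by []. Qed.
Lemma wact_rcons w a v : wa (rcons w a) v = wa w (refl (alpha a) v).
Proof. by rewrite /wact foldr_rcons. Qed.
Lemma wactD w u v : wa w (u + v) = wa w u + wa w v.
Proof. by elim: w => //= a w IH; rewrite IH reflD. Qed.
Lemma wactZ w c v : wa w (c *: v) = c *: wa w v.
Proof. by elim: w => //= a w IH; rewrite IH reflZ. Qed.
Lemma wactN w v : wa w (- v) = - wa w v.
Proof. by rewrite -scaleN1r wactZ scaleN1r. Qed.
Lemma wactB w u v : wa w (u - v) = wa w u - wa w v.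
Proof. by rewrite wactD wactN. Qed.
Lemma wact0 w : wa w 0 = 0.
Proof. by rewrite -(scale0r (0 : V)) wactZ !scale0r. Qed.
Lemma wact_sum w (I : finType) (F : I -> V) : wa w (\sum_i F i) = \sum_i wa w (F i).
Proof. by elim/big_rec2: _ => [|i x y _ <-]; rewrite ?wact0 ?wactD. Qed.
Lemma wact_in w v : v \in Phi -> wa w v \in Phi.
Proof. by elim: w => //= a w IH h; rewrite refl_in ?alpha_in ?IH. Qed.
Lemma wact_dot w u v : dot (wa w u) (wa w v) = dot u v.
Proof. by elim: w => //= a w IH; rewrite refl_dot ?alpha_neq0. Qed.
Lemma wact_revK w v : wa w (wa (rev w) v) = v.
Proof.
elim: w v => //= a w IH v; rewrite rev_cons wact_rcons IH.
exact: reflK (alpha_neq0 a) v.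
Qed.
Lemma wact_Krev w v : wa (rev w) (wa w v) = v.
Proof. by have := wact_revK (rev w) v; rewrite revK. Qed.
Lemma wact_inj w u v : wa w u = wa w v -> u = v.
Proof. by move=> h; rewrite -(wact_Krev w u) h wact_Krev. Qed.

Lemma reflKj j : involutive (refl (alpha j)).
Proof. exact: reflK (alpha_neq0 j). Qed.

Definition Npred w x := pos x /\ pos (- wa w x).
Definition Lw w := count (fun x => pb (Npred w x)) (undup Phi).

Lemma count_split (T : eqType) (P : pred T) (b : T) s :
  count P s = count (fun x => P x && (x == b)) s + count (fun x => P x && (x != b)) s.
Proof. by elim: s => //= x s ->; case: (P x); case: (x == b) => /=; lia. Qed.

Lemma count_at (T : eqType) (P : pred T) (b : T) s : uniq s -> b \in s ->
  count (fun x => P x && (x == b)) s = P b.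
Proof.
move=> us bs; rewrite (eq_count (a2 := fun x => (x == b) && P b)); last first.
  by move=> x /=; case: eqP => [->|]; rewrite ?andbT ?andbF.
case: (P b); last by apply/eqP; rewrite -leqn0 -(count_pred0 s) ; apply: sub_count => x /=; rewrite andbF.
rewrite (eq_count (a2 := pred1 b)); last by move=> x /=; rewrite andbT.
by rewrite count_uniq_mem // bs.
Qed.

Lemma perm_refl j : perm_eq (map (refl (alpha j)) (undup Phi)) (undup Phi).
Proof.
apply: uniq_perm; rewrite ?undup_uniq //.
  by rewrite map_inj_uniq ?undup_uniq //; apply: inv_inj; apply: reflKj.
move=> x; rewrite mem_undup; apply/mapP/idP.
  by case=> y; rewrite mem_undup => hy ->; rewrite refl_in ?alpha_in.
move=> hx; exists (refl (alpha j) x); last by rewrite reflKj.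
by rewrite mem_undup refl_in ?alpha_in.
Qed.

Lemma pb_ext (P Q : Prop) : (P <-> Q) -> pb P = pb Q.
Proof. by move=> [h1 h2]; apply/pbP/pbP. Qed.

Lemma Lw_rest w j :
  count (fun x => pb (Npred (rcons w j) x) && (x != alpha j)) (undup Phi) =
  count (fun x => pb (Npred w x) && (x != alpha j)) (undup Phi).
Proof.
rewrite -(permP (perm_refl j)) count_map; apply: eq_in_count => x.
rewrite mem_undup /= => xin.
have fin : refl (alpha j) x \in Phi by rewrite refl_in ?alpha_in.
have key : pos x /\ x != alpha j <-> pos (refl (alpha j) x) /\ refl (alpha j) x != alpha j.
  split; first by case=> h1 h2; apply: refl_pos.
  by case=> h1 h2; have := refl_pos fin h1 h2; rewrite reflKj.
apply/andP/andP; case=> /pbP [h1 h2] h3.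
  rewrite wact_rcons reflKj in h2.
  by case: key => _ /(_ (conj h1 h3)) [h4 h5]; split => //; apply/pbP.
case: key => /(_ (conj h1 h3)) [h4 h5] _; split => //; apply/pbP; split => //.
by rewrite wact_rcons reflKj.
Qed.

Lemma alpha_undup j : alpha j \in undup Phi.
Proof. by rewrite mem_undup alpha_in. Qed.

Lemma Lw_rcons_pos w j : pos (wa w (alpha j)) -> Lw (rcons w j) = (Lw w).+1.
Proof.
move=> hp; rewrite /Lw [in LHS](count_split _ (alpha j)) [in RHS](count_split _ (alpha j)) Lw_rest !count_at ?undup_uniq ?alpha_undup //.
have -> : pb (Npred (rcons w j) (alpha j)) = true.
  apply/pbP; split; first exact: pos_alpha.
  by rewrite wact_rcons refl_self ?alpha_neq0 // wactN opprK.
have -> : pb (Npred w (alpha j)) = false.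
  apply/pbP => [[_ hn]]; apply: (root_not_both (wact_in w (alpha_in j))) => //.
by [].
Qed.

Lemma Lw_rcons_neg w j : pos (- wa w (alpha j)) -> (Lw (rcons w j)).+1 = Lw w.
Proof.
move=> hp; rewrite /Lw [in LHS](count_split _ (alpha j)) [in RHS](count_split _ (alpha j)) Lw_rest !count_at ?undup_uniq ?alpha_undup //.
have -> : pb (Npred (rcons w j) (alpha j)) = false.
  apply/pbP => [[_]]; rewrite wact_rcons refl_self ?alpha_neq0 // wactN opprK => hn.
  by apply: (root_not_both (wact_in w (alpha_in j))).
have -> : pb (Npred w (alpha j)) = true by apply/pbP; split => //; exact: pos_alpha.
by [].
Qed.

Lemma Lw_nil : Lw [::] = 0%N.
Proof.
rewrite /Lw; rewrite (eq_in_count (a2 := pred0)) ?count_pred0 // => x.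
rewrite mem_undup => xin /=; apply/pbP => [[h1 h2]]; exact: root_not_both xin h1 h2.
Qed.

Lemma Lw_size w : (Lw w <= size w)%N.
Proof.
elim/last_ind: w => [|w j IH]; first by rewrite Lw_nil.
rewrite size_rcons.
case: (root_posneg (wact_in w (alpha_in j))) => h.
  by rewrite Lw_rcons_pos.
by have := Lw_rcons_neg h; lia.
Qed.

Lemma Lw_equiv w w' : wequiv alpha w w' -> Lw w = Lw w'.
Proof.
move=> h; apply: eq_count => x; apply: pb_ext; rewrite /Npred h; done.
Qed.

Lemma wact_refl u b v : wa u (refl b v) = refl (wa u b) (wa u v).
Proof. by rewrite /refl wactB wactZ !wact_dot. Qed.

Lemma del u j : pos (- wa u (alpha j)) ->
  exists u', (size u').+1 = size u /\ wequiv alpha (rcons u j) u'.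
Proof.
elim: u => [|a u1 IH] /= h.
  by exfalso; apply: (root_not_both (alpha_in j)) h; apply: pos_alpha.
case: (root_posneg (wact_in u1 (alpha_in j))) => hy.
  case: (eqVneq (wa u1 (alpha j)) (alpha a)) => ha.
    exists u1; split => // v /=.
    rewrite wact_rcons wact_refl ha; exact: reflKj.
  have [hp _] := refl_pos (wact_in u1 (alpha_in j)) hy ha.
  by exfalso; apply: (root_not_both (refl_in (alpha_in a) (wact_in u1 (alpha_in j)))) h.
have [u1' [hs he]] := IH hy.
by exists (a :: u1'); split => [|v]; rewrite /= ?hs // -he.
Qed.

Lemma Lw_word w : exists w', size w' = Lw w /\ wequiv alpha w w'.
Proof.
elim/last_ind: w => [|u j [u' [hs he]]]; first by exists [::]; rewrite Lw_nil.
case: (root_posneg (wact_in u (alpha_in j))) => h.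
  exists (rcons u' j); split; first by rewrite size_rcons hs Lw_rcons_pos.
  by move=> v; rewrite !wact_rcons he.
have h' : pos (- wa u' (alpha j)) by rewrite -he.
have [u'' [hs' he']] := del h'.
exists u''; split.
  by have := Lw_rcons_neg h; rewrite -hs -hs'; case.
by move=> v; rewrite -he' !wact_rcons he.
Qed.

Lemma len_Lw w : is_length alpha w (Lw w).
Proof.
split; first by have [w' [h1 h2]] := Lw_word w; exists w'.
by move=> w' he; rewrite (Lw_equiv he) Lw_size.
Qed.

Lemma len_uniq w k : is_length alpha w k -> k = Lw w.
Proof.
case=> [[w' [hs he]] hmin]; apply/eqP; rewrite eqn_leq; apply/andP; split.
  by have [w'' [h1 h2]] := Lw_word w; rewrite -h1; apply: hmin.
by rewrite (Lw_equiv he) -hs Lw_size.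
Qed.

Lemma descentP w j : right_descent alpha w j <-> pos (- wa w (alpha j)).
Proof.
split.
  case=> k1 [k2 [/len_uniq -> /len_uniq -> hlt]].
  case: (root_posneg (wact_in w (alpha_in j))) => // h.
  by move: hlt; rewrite Lw_rcons_pos // ltnNge leqnSn.
move=> h; exists (Lw (rcons w j)), (Lw w); split; try exact: len_Lw.
by rewrite -(Lw_rcons_neg h).
Qed.

Lemma dot_gt0 (u : V) : u != 0 -> 0 < dot u u.
Proof. by move=> h; rewrite lt_def dot_neq0 // dot_ge0. Qed.

Lemma cs_strict (u v : V) : v != 0 -> (forall c, u != c *: v) ->
  dot u v ^+ 2 < dot u u * dot v v.
Proof.
move=> hv hu; set x := dot v v *: u - dot u v *: v.
have hx : x != 0.
  apply/eqP => hx0.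
  have e : dot v v *: u = dot u v *: v by apply/eqP; rewrite -subr_eq0; apply/eqP.
  move: (hu ((dot v v)^-1 * dot u v)); rewrite -scalerA -e scalerA mulVf ?dot_neq0 // scale1r eqxx //.
have e : dot x x = dot v v * (dot u u * dot v v - dot u v ^+ 2).
  rewrite /x !dotBl !dotBr !dotZl !dotZr (dotC v u); ring.
have := dot_gt0 hx; rewrite e pmulr_rgt0 ?dot_gt0 //; by rewrite subr_gt0.
Qed.

Lemma is_int_pos (x : R) : is_int x -> 0 < x -> exists z : int, x = z%:~R /\ (0 < z)%R.
Proof. by move=> [z ->] h; exists z; split => //; rewrite -(ltr0z R). Qed.

Lemma sub_root (g a : V) : g \in Phi -> a \in Phi -> 0 < dot g a -> g != a -> g != - a ->
  g - a \in Phi.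
Proof.
move=> gin ain hpos hne hne'.
have ha := dot_gt0 (root_neq0 ain).
have hg := dot_gt0 (root_neq0 gin).
have p1 : 0 < 2 * dot g a / dot a a by rewrite divr_gt0 // mulr_gt0.
have p2 : 0 < 2 * dot a g / dot g g by rewrite divr_gt0 // dotC mulr_gt0.
have [za [eza za0]] := is_int_pos (root_int ain gin) p1.
have [zb [ezb zb0]] := is_int_pos (root_int gin ain) p2.
have hcs : dot g a ^+ 2 < dot g g * dot a a.
  apply: cs_strict; first exact: root_neq0.
  move=> c; apply/eqP => hc.
  have := root_mult ain (etrans (congr1 (fun y => y \in Phi) (esym hc)) gin).
  by case=> hc'; [move: hne|move: hne']; rewrite hc hc' ?scale1r ?scaleN1r eqxx.
have hprod : (za * zb)%:~R < 4 :> R.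
  rewrite intrM -eza -ezb (dotC a g).
  have -> : 2 * dot g a / dot a a * (2 * dot g a / dot g g) = 4 * (dot g a ^+ 2 / (dot g g * dot a a)).
    by field; apply/andP; split; rewrite lt0r_neq0.
  rewrite -[X in _ < X]mulr1 ltr_pM2l // ltr_pdivrMr ?mulr_gt0 // mul1r //.
have hz : (za * zb < 4)%R by rewrite -(ltr_int R).
have [hza|hzb] : za = 1 \/ zb = 1 by lia.
  by move: (refl_in ain gin); rewrite /refl eza hza scale1r.
by move: (oppr_in (refl_in gin ain)); rewrite /refl ezb hzb scale1r opprB.
Qed.

Lemma pos_multiple (x : V) j : x \in Phi -> pos x -> (forall k, k != j -> crd x k = 0) -> x = alpha j.
Proof.
move=> xin xp H.
have ex : x = crd x j *: alpha j.
  apply: crd_inj => k; rewrite crdZ crd_alpha.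
  case: (eqVneq j k) => [->|jk]; first by rewrite mulr1.
  by rewrite mulr0 H // eq_sym.
have := root_mult (alpha_in j) (etrans (congr1 (fun y => y \in Phi) (esym ex)) xin).
case=> hc; first by rewrite ex hc scale1r.
by exfalso; apply: isnat_m1; rewrite -hc; apply: xp.
Qed.

Lemma nonsimple_sub (g : V) : g \in Phi -> pos g -> (forall j, g != alpha j) ->
  exists j, g - alpha j \in Phi /\ pos (g - alpha j).
Proof.
move=> gin gp gne.
have [j hj] : exists j, 0 < dot g (alpha j).
  apply: NNPP => H.
  have : dot g g <= 0.
    have -> : dot g g = \sum_k crd g k * dot (alpha k) g.
      rewrite {2}(crd_expand g) dotC.
      elim/big_rec2: _ => [|k y z _ <-]; first by rewrite dotE big1 // => k _; rewrite mxE mul0r.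
      by rewrite dotDl dotZl.
    elim/big_rec: _ => [|k y _ hy] //.
    suff h1 : crd g k * dot (alpha k) g <= 0 by lra.
    rewrite mulr_ge0_le0 ?isnat_ge0 // dotC; rewrite leNgt; apply/negP => hk.
    by apply: H; exists k.
  by rewrite leNgt dot_gt0 ?root_neq0.
have hne' : g != - alpha j.
  apply/eqP => e; apply: (root_not_both (alpha_in j)); first exact: pos_alpha.
  by rewrite -e.
have hin := sub_root gin (alpha_in j) hj (gne j) hne'.
exists j; split => //.
case: (root_posneg hin) => // hn; exfalso.
move/eqP: (gne j); apply; apply: pos_multiple => // k kj.
apply: isnatN; first exact: gp.
by have := hn k; rewrite crdN crdB crd_alpha (eq_sym j k) (negbTE kj) subr0.
Qed.

Lemma posrootP b : posroot Phi alpha b <-> b \in Phi /\ pos b.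
Proof. by split; case=> h1 h2; split => //; apply/nncombP. Qed.
Lemma rleP b g : rle alpha b g <-> pos (g - b).
Proof. exact: nncombP. Qed.

Lemma Nbar_negP w b : b \in Phi -> pos b -> (Nbar Phi alpha w b <-> pos (- wa w b)).
Proof.
move=> bin bp; split.
  by case=> _ [h [/posrootP [_ hp] ->]]; rewrite opprK.
move=> hn; split; first by apply/posrootP.
exists (- wa w b); split; last by rewrite opprK.
by apply/posrootP; split => //; rewrite oppr_in ?wact_in.
Qed.

Definition ht (v : V) := \sum_k crd v k.

Lemma maxel (P : V -> Prop) (s : seq V) : (exists2 x, x \in s & P x) ->
  exists b, [/\ b \in s, P b & forall y, y \in s -> P y -> ht y <= ht b].
Proof.
elim: s => [[x]//|a s IH] [x xin px].
have [hex|hnex] := classic (exists2 x, x \in s & P x).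
  have [b [bin pb' hb0]] := IH hex.
  have [pa|pa] := classic (P a).
    case: (leP (ht a) (ht b)) => hab.
      exists b; split; rewrite ?in_cons ?bin ?orbT // => y; rewrite in_cons => /orP [/eqP ->|]//.
      exact: hb0.
    exists a; split; rewrite ?in_cons ?eqxx // => y; rewrite in_cons => /orP [/eqP ->|hy py]//.
    by apply: le_trans (hb0 y hy py) _; apply: ltW.
  exists b; split; rewrite ?in_cons ?bin ?orbT // => y; rewrite in_cons => /orP [/eqP ->|]//.
  exact: hb0.
have xa : x = a.
  move: xin; rewrite in_cons => /orP [/eqP //|hx]; by exfalso; apply: hnex; exists x.
exists a; split; rewrite ?in_cons ?eqxx -?xa // => y; rewrite in_cons => /orP [/eqP ->|hy py]//.
by exfalso; apply: hnex; exists y.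
Qed.

Lemma pb_and (P : Prop) (b : bool) : pb (P /\ b) = pb P && b.
Proof. by apply/pbP/andP => [[h1 h2]|[/pbP h1 h2]]; split => //; apply/pbP. Qed.

Section MainSec.
Variables (theta : V) (m : 'I_n -> nat) (i : 'I_n).
Hypothesis htheta : theta = \sum_(j < n) (m j)%:R *: alpha j.
Hypothesis hmax : forall b, posroot Phi alpha b -> rle alpha b theta.
Hypothesis hmi : m i = 1%N.

Lemma crd_le1 b : b \in Phi -> pos b -> crd b i <= 1.
Proof.
move=> bin bp; have /rleP h := hmax (proj2 (posrootP b) (conj bin bp)).
have := isnat_ge0 (h i); rewrite crdB htheta crd_comb hmi; lra.
Qed.

Lemma MsetP b : Mset Phi alpha i b <-> [/\ b \in Phi, pos b & crd b i = 1].
Proof.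
split.
  case=> /posrootP [bin bp] /rleP h; split => //.
  have := isnat_ge0 (h i); have := crd_le1 bin bp; rewrite crdB crd_alpha eqxx /= mulr1n; lra.
case=> bin bp b1; split; first by apply/posrootP.
apply/rleP => k; rewrite crdB crd_alpha.
case: (eqVneq i k) => [<-|ik]; first by rewrite b1 subrr; exact: isnat0.
by rewrite subr0; apply: bp.
Qed.

Lemma dir2 (N : V -> Prop) w : in_Wi alpha i w ->
  (forall b, N b <-> Nbar Phi alpha w b) ->
  abelian_ideal Phi alpha (fun b => Mset Phi alpha i b /\ ~ N b).
Proof.
move=> hw hN; split.
- by move=> b [[]].
- move=> b g [/MsetP [bin bp b1] hNb] /posrootP [gin gp] /rleP hbg.
  have g1 : crd g i = 1.
    have := isnat_ge0 (hbg i); have := crd_le1 gin gp; rewrite crdB b1; lra.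
  split; first by apply/MsetP.
  move=> /hN /(Nbar_negP w gin gp) hng.
  have hwb : pos (wa w b).
    case: (root_posneg (wact_in w bin)) => // h; exfalso.
    by apply: hNb; apply/hN; apply/(Nbar_negP w bin bp).
  have hk : forall k, k != i -> pos (wa w (alpha k)).
    move=> k ki; case: (root_posneg (wact_in w (alpha_in k))) => // h.
    by move: ki; rewrite (hw k) ?eqxx //; apply/descentP.
  have hsum : pos (wa w (g - b)).
    rewrite (crd_expand (g - b)) wact_sum => k'.
    rewrite crd_sum; apply: isnat_sum => k; rewrite wactZ crdZ.
    case: (eqVneq k i) => [->|ki].
      by rewrite crdB g1 b1 subrr mul0r; exact: isnat0.
    by apply: isnatM; [apply: hbg|apply: hk].
  have : pos (wa w g) by rewrite -(subrK b g) wactD; apply: posD.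
  by move=> hp; apply: (root_not_both (wact_in w gin)).
- move=> b g [/MsetP [bin bp b1] _] [/MsetP [gin gp g1] _]; apply/negP => hin.
  have := crd_le1 hin (posD bp gp); rewrite crdD b1 g1; lra.
Qed.

Lemma dir1 k : forall N : V -> Prop, (forall b, N b -> Mset Phi alpha i b) ->
  (forall b g, Mset Phi alpha i b -> ~ N b -> posroot Phi alpha g -> rle alpha b g -> ~ N g) ->
  count (fun x => pb (N x)) (undup Phi) = k ->
  exists w, forall b, N b <-> Nbar Phi alpha w b.
Proof.
elim: k => [|k IH] N hNM hcl hcnt.
  exists [::] => b; split.
    move=> hb0; exfalso; have /MsetP [bin _ _] := hNM b hb0.
    have : has (fun x => pb (N x)) (undup Phi).
      by apply/hasP; exists b; rewrite ?mem_undup //; apply/pbP.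
    by rewrite has_count hcnt.
  move=> [/posrootP [bin bp] [h [/posrootP [hin hp] /= he]]].
  by exfalso; apply: (root_not_both hin hp); rewrite -he.
have : has (fun x => pb (N x)) (undup Phi) by rewrite has_count hcnt.
move=> /hasP [x xin /pbP hx].
have [beta [betain hNbeta hmaxb]] := maxel (ex_intro2 _ _ x xin hx).
have /MsetP [bin bp b1] := hNM _ hNbeta.
pose N' := fun b => N b /\ b != beta.
have hcnt' : count (fun x => pb (N' x)) (undup Phi) = k.
  rewrite (eq_count (a2 := fun x => pb (N x) && (x != beta))); last by move=> y; rewrite /N' pb_and.
  move: hcnt; rewrite (count_split _ beta) count_at ?undup_uniq //.
  rewrite (introT (pbP _) hNbeta) /=; lia.
have hht : forall g, posroot Phi alpha g -> rle alpha beta g -> N g -> g = beta.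
  move=> g /posrootP [gin gp] /rleP hbg hg.
  have gu : g \in undup Phi by rewrite mem_undup.
  have hle := hmaxb g gu hg.
  have hs : \sum_k crd (g - beta) k == 0.
    rewrite eq_le sumr_ge0 ?andbT; last by move=> k' _; apply: isnat_ge0.
    rewrite (eq_bigr (fun k' => crd g k' - crd beta k')); last by move=> k' _; rewrite crdB.
    by rewrite sumrB subr_le0.
  move: hs; rewrite psumr_eq0; last by move=> k' _; apply: isnat_ge0.
  move=> /allP hall; apply: crd_inj => k'.
  by have /= /eqP := hall k' (mem_index_enum k'); rewrite crdB => /eqP; rewrite subr_eq0 => /eqP.
have hN'M : forall b, N' b -> Mset Phi alpha i b by move=> b [hb0 _]; apply: hNM.
have hcl' : forall b g, Mset Phi alpha i b -> ~ N' b -> posroot Phi alpha g -> rle alpha b g -> ~ N' g.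
  move=> b g hMb hN'b hg hbg [hNg hgne].
  case: (eqVneq b beta) => [eb|nb].
    by subst b; move: hgne; rewrite (hht g hg hbg hNg) eqxx.
  by apply: (hcl b g hMb _ hg hbg hNg) => hNb; apply: hN'b.
have [w' hw'] := IH N' hN'M hcl' hcnt'.
have ha : forall y, y \in Phi -> pos y -> pos (- wa w' y) -> [/\ crd y i = 1, N y & y != beta].
  move=> y yin yp hy; have : N' y by apply/hw'; apply/(Nbar_negP w' yin yp).
  case=> hNy hne.
  by have /MsetP [_ _ ->] := hNM y hNy.
have gin : wa w' beta \in Phi by apply: wact_in.
have gp : pos (wa w' beta).
  case: (root_posneg gin) => // h; exfalso.
  by have [_ _] := ha beta bin bp h; rewrite eqxx.
have [j hj] : exists j, wa w' beta = alpha j.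
  apply: NNPP => hns.
  have hns' : forall j, wa w' beta != alpha j by move=> j; apply/eqP => e; apply: hns; exists j.
  have [j [hin hp]] := nonsimple_sub gin gp hns'.
  pose del := wa (rev w') (alpha j); pose eps := wa (rev w') (wa w' beta - alpha j).
  have wd : wa w' del = alpha j by rewrite wact_revK.
  have we : wa w' eps = wa w' beta - alpha j by rewrite wact_revK.
  have din : del \in Phi by apply: wact_in; apply: alpha_in.
  have ein : eps \in Phi by apply: wact_in.
  have hbeta : beta = eps + del by apply: (@wact_inj w'); rewrite wactD wd we subrK.
  have cb : crd eps i + crd del i = 1 by rewrite -crdD -hbeta.
  case: (root_posneg din) => hd.
    case: (root_posneg ein) => he.
      case: (isnat_sum1 (he i) (hd i) cb) => [[e1 _]|[_ d1]].
        have hNe : N eps.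
          apply: NNPP => hne; apply: (hcl eps beta) => //; first by apply/MsetP.
            by apply/posrootP.
          by apply/rleP; rewrite hbeta addrC addKr.
        have ene : eps != beta.
          apply/eqP => e; move: (root_neq0 din); rewrite (_ : del = 0) ?eqxx //.
          by apply: (@addrI _ eps); rewrite addr0 -hbeta e.
        have : Nbar Phi alpha w' eps by apply/hw'.
        move/(Nbar_negP w' ein he); rewrite we => hn.
        exact: (root_not_both hin hp hn).
      have hNd : N del.
        apply: NNPP => hne; apply: (hcl del beta) => //; first by apply/MsetP.
          by apply/posrootP.
        by apply/rleP; rewrite hbeta addrK.
      have dne : del != beta.
        apply/eqP => e; move: (root_neq0 ein); rewrite (_ : eps = 0) ?eqxx //.
        by apply: (@addIr _ del); rewrite add0r -hbeta e.
      have : Nbar Phi alpha w' del by apply/hw'.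
      move/(Nbar_negP w' din hd); rewrite wd => hn.
      exact: (root_not_both (alpha_in j) (pos_alpha j) hn).
    have hq : pos (- wa w' (- eps)) by rewrite wactN opprK we.
    have [c1 _ _] := ha (- eps) (oppr_in ein) he hq.
    have := crd_le1 din hd; move: cb c1; rewrite crdN; lra.
  have hq : pos (- wa w' (- del)) by rewrite wactN opprK wd; apply: pos_alpha.
  have [c1 _ _] := ha (- del) (oppr_in din) hd hq.
  move: cb c1; rewrite crdN => cb c1.
  case: (root_posneg ein) => he.
    have := crd_le1 ein he; lra.
  have := isnat_ge0 (he i); rewrite crdN; lra.
exists (j :: w') => b; split.
  move=> hNb; have /MsetP [bin' bp' _] := hNM b hNb.
  apply/(Nbar_negP _ bin' bp'); rewrite wact_cons.
  case: (eqVneq b beta) => [->|nb].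
    by rewrite hj refl_self ?alpha_neq0 // opprK; exact: pos_alpha.
  have : Nbar Phi alpha w' b by apply/hw'; split.
  move/(Nbar_negP w' bin' bp') => hn.
  have hne : - wa w' b != alpha j.
    apply/eqP => e.
    have : b = - beta by apply: (@wact_inj w'); rewrite wactN hj -e opprK.
    move=> eb; apply: (root_not_both bin bp); rewrite -eb //.
  have [hp _] := refl_pos (oppr_in (wact_in w' bin')) hn hne.
  by rewrite -reflN.
case=> /posrootP [bin' bp'] hrest.
have : Nbar Phi alpha (j :: w') b by split => //; apply/posrootP.
move/(Nbar_negP _ bin' bp'); rewrite wact_cons => hn.
case: (eqVneq b beta) => [->|nb] //.
suff : N' b by case.
apply/hw'; apply/(Nbar_negP w' bin' bp').
have hin : - refl (alpha j) (wa w' b) \in Phi by rewrite oppr_in // refl_in ?alpha_in ?wact_in.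
have hne : - refl (alpha j) (wa w' b) != alpha j.
  apply/eqP => e.
  have : wa w' b = wa w' beta.
    have e2 : refl (alpha j) (wa w' b) = - alpha j by apply/eqP; rewrite -eqr_oppLR e.
    by rewrite hj -(reflKj j (wa w' b)) e2 reflN refl_self ?alpha_neq0 // opprK.
  by move/wact_inj => eb; move: nb; rewrite eb eqxx.
have [hp _] := refl_pos hin hn hne.
by move: hp; rewrite reflN reflKj.
Qed.

End MainSec.

End Roots.

Unset Implicit Arguments.

Theorem proposition5p4 (R : realFieldType) (n : nat)
    (Phi : seq 'rV[R]_n) (alpha : 'I_n -> 'rV[R]_n)
    (theta : 'rV[R]_n) (m : 'I_n -> nat) (i : 'I_n) (N : 'rV[R]_n -> Prop) :
  root_system Phi -> irreducible_rs Phi -> is_base Phi alpha ->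
  (* theta = sum_j m_j alpha_j is the highest root *)
  theta \in Phi -> theta = \sum_(j < n) (m j)%:R *: alpha j ->
  (forall b, posroot Phi alpha b -> rle alpha b theta) ->
  m i = 1%N ->
  (forall b, N b -> Mset Phi alpha i b) ->
  (abelian_ideal Phi alpha (fun b => Mset Phi alpha i b /\ ~ N b) <->
   exists w : seq 'I_n, in_Wi alpha i w /\ (forall b, N b <-> Nbar Phi alpha w b)).
Proof.
move=> hrs _ hb _ htheta hmax hmi hNM; split.
  case=> _ h2 _.
  have hcl : forall b g, Mset Phi alpha i b -> ~ N b -> posroot Phi alpha g ->
      rle alpha b g -> ~ N g.
    by move=> b g hMb hNb hg hbg; case: (h2 b g (conj hMb hNb) hg hbg).
  have [w hw] := dir1 hrs hb htheta hmax hmi hNM hcl (erefl _).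
  exists w; split => // j /(descentP hrs hb) hd.
  have : N (alpha j).
    by apply/hw; apply/(Nbar_negP hrs hb w (alpha_in hb j) (pos_alpha hb j)).
  move=> /hNM /(MsetP hb htheta hmax hmi) [_ _]; rewrite (crd_alpha hb).
  by case: eqP => // _ /eqP; rewrite eq_sym oner_eq0.
by case=> w [hw hN]; apply: (dir2 hrs hb htheta hmax hmi hw hN).
Qed.
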